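(* Let $\boldsymbol{P}$ be a feasible policy (as defined in the context). Then every entry of $\boldsymbol{Y}_{\boldsymbol{P}}$ is non-negative.
   Context: $M\ge2$ worker nodes, undirected graph with neighborhood indicators $d_{i,m}\in\{0,1\}$. $\boldsymbol{P}=[p_{i,m}]_{M\times M}$ has rows that are probability distributions; $t_{i,m}>0$ are iteration times; $\alpha>0$, $\rho>0$. Define $\overline{t}_i=\sum_m t_{i,m}p_{i,m}d_{i,m}$, $p_i=\frac{1/\overline{t}_i}{\sum_m 1/\overline{t}_m}$, $\gamma_{i,m}=\frac{d_{i,m}+d_{m,i}}{2p_{i,m}}$ (terms with $p_{i,m}=0$ taken as $0$). $\boldsymbol{Y}_{\boldsymbol{P}}=[y_{i,m}]$ with $y_{i,i}=1-2\alpha\rho\sum_{m\ne i}p_ip_{i,m}\gamma_{i,m}+\alpha^2\rho^2\sum_{m\ne i}(p_ip_{i,m}\gamma_{i,m}^2+p_mp_{m,i}\gamma_{m,i}^2)$ and, for $m\ne i$, $y_{i,m}=\alpha\rho(p_ip_{i,m}\gamma_{i,m}+p_mp_{m,i}\gamma_{m,i})-\alpha^2\rho^2(p_ip_{i,m}\gamma_{i,m}^2+p_mp_{m,i}\gamma_{m,i}^2)$. $\boldsymbol{P}$ is feasible if: there is $\overline{t}$ with $\overline{t}=\frac1M\sum_m t_{i,m}p_{i,m}d_{i,m}$ for all $i$; $p_{i,m}>\alpha\rho(d_{i,m}+d_{m,i})$ for all $i\ne m$ with $d_{i,m}\ne0$; $p_{i,m}=0$ whenever $d_{i,m}=0$;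 and $\sum_m p_{i,m}=1$ for all $i$. *)

(* Defs.v *)
From HB Require Import structures.
From mathcomp Require Import all_boot all_order all_algebra.
Set Implicit Arguments. Unset Strict Implicit. Unset Printing Implicit Defensive.
Import Order.TTheory GRing.Theory Num.Theory.
Local Open Scope ring_scope.

Section Defs.
Variables (R : realFieldType) (M : nat).
Variable d : 'I_M -> 'I_M -> bool.   (* neighborhood indicators d_{i,m} *)
Variable P : 'M[R]_M.
Variable t : 'I_M -> 'I_M -> R.      (* iteration times t_{i,m} *)
Variables alpha rho : R.

Definition dR (i m : 'I_M) : R := (d i m)%:R.

Definition tbar (i : 'I_M) : R := \sum_(m < M) t i m * P i m * dR i m.

Definition pnode (i : 'I_M) : R := (tbar i)^-1 / (\sum_(m < M) (tbar m)^-1).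

Definition gamma (i m : 'I_M) : R :=
  if P i m == 0 then 0 else (dR i m + dR m i) / (2 * P i m).

Definition Ymat : 'M[R]_M :=
  \matrix_(i < M, m < M)
    if i == m then
      1 - 2 * alpha * rho * (\sum_(k < M | k != i) pnode i * P i k * gamma i k)
      + alpha ^+ 2 * rho ^+ 2 *
        (\sum_(k < M | k != i)
           (pnode i * P i k * (gamma i k) ^+ 2 + pnode k * P k i * (gamma k i) ^+ 2))
    else
      alpha * rho * (pnode i * P i m * gamma i m + pnode m * P m i * gamma m i)
      - alpha ^+ 2 * rho ^+ 2 *
        (pnode i * P i m * (gamma i m) ^+ 2 + pnode m * P m i * (gamma m i) ^+ 2).

Definition feasible : Prop :=
  [/\ exists tb : R, forall i, tb = M%:R^-1 * (\sum_(m < M) t i m * P i m * dR i m),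
      forall i m, i != m -> d i m -> alpha * rho * (dR i m + dR m i) < P i m,
      forall i m, ~~ d i m -> P i m = 0
    & forall i, \sum_(m < M) P i m = 1].

End Defs.

(* Main.v *)
Require Import Defs.
From HB Require Import structures.
From mathcomp Require Import all_boot all_order all_algebra.
From mathcomp Require Import ring lra.
Import Order.TTheory GRing.Theory Num.Theory.
Set Implicit Arguments.
Local Open Scope ring_scope.

Section Aux.
Variables (R : realFieldType) (M : nat) (d : 'I_M -> 'I_M -> bool) (P : 'M[R]_M)
  (t : 'I_M -> 'I_M -> R) (alpha rho : R).
Hypothesis d_sym : forall i m, d i m = d m i.
Hypothesis P_nonneg : forall i m, 0 <= P i m.
Hypothesis t_pos : forall i m, 0 < t i m.
Hypothesis ap : 0 < alpha * rho.
Hypothesis hgt : forall i m, i != m -> d i m -> alpha * rho * (dR R d i m + dR R d m i) < P i m.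

Lemma dR_ge0 i m : 0 <= dR R d i m.
Proof. by rewrite /dR ler0n. Qed.

Lemma gamma_ge0 i m : 0 <= gamma d P i m.
Proof.
rewrite /gamma; case: ifP => // _.
apply: divr_ge0; first by apply: addr_ge0; apply: dR_ge0.
by apply: mulr_ge0 => //.
Qed.

Lemma Pg i m : i != m -> P i m * gamma d P i m = dR R d i m.
Proof.
move=> nim; rewrite /gamma.
case dim: (d i m).
  have dmi : d m i by rewrite -d_sym.
  have h := hgt nim dim.
  rewrite /dR dim dmi /= in h *.
  have hP : 0 < P i m by move: h ap; set a := alpha * rho => h ap'; lra.
  rewrite (gt_eqF hP).
  by field; rewrite gt_eqF.
have dmi : d m i = false by rewrite -d_sym.
by rewrite /dR dim dmi /= add0r mul0r; case: ifP => _; rewrite mulr0.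
Qed.

Lemma Pg2 i m : i != m ->
  alpha * rho * (P i m * gamma d P i m ^+ 2) <= (P i m * gamma d P i m) / 2.
Proof.
move=> nim; rewrite /gamma.
case dim: (d i m).
  have dmi : d m i by rewrite -d_sym.
  have h := hgt nim dim.
  rewrite /dR dim dmi /= in h *.
  have hP : 0 < P i m by move: h ap; set a := alpha * rho => h ap'; lra.
  rewrite (gt_eqF hP).
  have -> : P i m * ((1 + 1) / (2 * P i m)) ^+ 2 = (P i m)^-1.
    by field; rewrite gt_eqF.
  have -> : P i m * ((1 + 1) / (2 * P i m)) / 2 = 2^-1.
    by field; rewrite gt_eqF.
  rewrite -/(_ / P i m) ler_pdivrMr //.
  by move: h ap; set a := alpha * rho => h ap'; lra.
have dmi : d m i = false by rewrite -d_sym.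
by rewrite /dR dim dmi /= add0r mul0r; case: ifP => _; rewrite ?expr0n /= !mulr0 ?mul0r.
Qed.

Lemma tbar_inv_ge0 k : 0 <= (tbar d P t k)^-1.
Proof.
rewrite invr_ge0; apply: sumr_ge0 => j _.
apply: mulr_ge0; [apply: mulr_ge0 => //; exact: ltW|exact: dR_ge0].
Qed.

Lemma pnode_ge0 i : 0 <= pnode d P t i.
Proof.
rewrite /pnode; apply: divr_ge0; first exact: tbar_inv_ge0.
apply: sumr_ge0 => k _; exact: tbar_inv_ge0.
Qed.

Lemma pnode_le1 i : pnode d P t i <= 1.
Proof.
rewrite /pnode.
have hge : forall k, 0 <= (tbar d P t k)^-1.
  move=> k; rewrite invr_ge0; apply: sumr_ge0 => j _.
  apply: mulr_ge0; [apply: mulr_ge0 => //; exact: ltW|exact: dR_ge0].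
have hle : (tbar d P t i)^-1 <= \sum_(m < M) (tbar d P t m)^-1.
  rewrite (bigD1 i) //= lerDl; apply: sumr_ge0 => k _; exact: hge.
have := hge i; rewrite le_eqVlt => /orP [/eqP <-|hpos]; first by rewrite mul0r ler01.
by rewrite ler_pdivrMr ?mul1r //; apply: lt_le_trans hle.
Qed.

End Aux.

Theorem lemma2 (R : realFieldType) (M : nat) (hM : (2 <= M)%N)
  (d : 'I_M -> 'I_M -> bool) (P : 'M[R]_M) (t : 'I_M -> 'I_M -> R)
  (alpha rho : R)
  (d_sym : forall i m, d i m = d m i)
  (P_nonneg : forall i m, 0 <= P i m)
  (P_rows : forall i, \sum_(m < M) P i m = 1)
  (t_pos : forall i m, 0 < t i m)
  (alpha_pos : 0 < alpha) (rho_pos : 0 < rho)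
  (hfeas : feasible d P t alpha rho) :
  forall i m, 0 <= Ymat d P t alpha rho i m.
Proof.
case: hfeas => _ hgt _ _.
have ap : 0 < alpha * rho by apply: mulr_gt0.
move=> i m; rewrite /Ymat mxE.
case: (eqVneq i m) => [e|nim]; first subst m; rewrite ?eqxx ?(negbTE nim).
  set S1 := \sum_(k < M | k != i) _.
  set S2 := \sum_(k < M | k != i) _.
  have hS2 : 0 <= S2.
    apply: sumr_ge0 => k _; apply: addr_ge0; apply: mulr_ge0;
      try apply: mulr_ge0; rewrite ?exprn_ge0 //; 
      solve [exact: (pnode_ge0 R d P t P_nonneg t_pos) | exact: (gamma_ge0 R d P P_nonneg)].
  have hS1 : S1 = pnode d P t i * \sum_(k < M | k != i) dR R d i k.
    rewrite /S1 mulr_sumr; apply: eq_bigr => k nk.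
    by rewrite -mulrA (Pg R d P alpha rho d_sym ap hgt) // eq_sym.
  have hD : 0 <= \sum_(k < M | k != i) dR R d i k by apply: sumr_ge0 => k _; exact: (dR_ge0 R d).
  have hD1 : 2 * (alpha * rho) * \sum_(k < M | k != i) dR R d i k <= 1.
    apply: (le_trans (y := \sum_(k < M | k != i) P i k)).
      rewrite mulr_sumr; apply: ler_sum => k nk.
      case dik: (d i k).
        have := hgt i k; rewrite eq_sym nk dik => /(_ isT isT).
        rewrite /dR (d_sym k i) dik /=; set a := alpha * rho => h; apply: ltW; lra.
      by rewrite /dR dik mulr0.
    rewrite -(P_rows i) [X in _ <= X](bigID (fun k => k != i)) /= lerDl.
    by apply: sumr_ge0.
  have hp0 := pnode_ge0 R d P t P_nonneg t_pos i.
  have hp1 := pnode_le1 R d P t P_nonneg t_pos i.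
  rewrite hS1.
  have h3 : 2 * alpha * rho * (pnode d P t i * \sum_(k < M | k != i) dR R d i k) <= 1.
    rewrite (_ : 2 * alpha * rho * (pnode d P t i * \sum_(k < M | k != i) dR R d i k)
       = pnode d P t i * (2 * (alpha * rho) * \sum_(k < M | k != i) dR R d i k)); last by ring.
    have hX : 0 <= 2 * (alpha * rho) * \sum_(k < M | k != i) dR R d i k.
      by apply: mulr_ge0 => //; apply: mulr_ge0 => //; apply: ltW.
    move: hX hD1 hp0 hp1; set X := 2 * _ * _; set p := pnode _ _ _ _ => *; nra.
  apply: addr_ge0; first by rewrite subr_ge0.
  apply: mulr_ge0 => //; apply: mulr_ge0; apply: exprn_ge0; exact: ltW.
have hp0 := pnode_ge0 R d P t P_nonneg t_pos.
have A1 := Pg2 R d P alpha rho d_sym ap hgt i m nim.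
have nmi : m != i by rewrite eq_sym.
have A2 := Pg2 R d P alpha rho d_sym ap hgt m i nmi.
set X := P i m * gamma d P i m in A1 *.
set X' := P i m * gamma d P i m ^+ 2 in A1 *.
set Y := P m i * gamma d P m i in A2 *.
set Y' := P m i * gamma d P m i ^+ 2 in A2 *.
have hX : 0 <= X by apply: mulr_ge0 => //; exact: (gamma_ge0 R d P P_nonneg).
have hY : 0 <= Y by apply: mulr_ge0 => //; exact: (gamma_ge0 R d P P_nonneg).
have pi0 := hp0 i; have pm0 := hp0 m.
set a := alpha * rho in ap A1 A2 *.
rewrite (_ : alpha ^+ 2 * rho ^+ 2 = a * a); last by rewrite /a; ring.
have e : a * (pnode d P t i * P i m * gamma d P i m + pnode d P t m * P m i * gamma d P m i)
  - a * a * (pnode d P t i * P i m * gamma d P i m ^+ 2 + pnode d P t m * P m i * gamma d P m i ^+ 2)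
  = a * (pnode d P t i * (X - a * X')) + a * (pnode d P t m * (Y - a * Y')).
  by rewrite /X /X' /Y /Y'; ring.
rewrite e; apply: addr_ge0; apply: mulr_ge0; try exact: ltW; apply: mulr_ge0 => //;
  rewrite subr_ge0; lra.
Qed.
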